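(* Let $n\ge1$ and $a,b>0$. Define $X_1=\frac{\arctan\sqrt{b/a}}{\sqrt{ab}}$, $X_2=\frac{1}{2a(a+b)}$, and $X_n=\left(\frac{\partial}{\partial a}\right)^{m-1}\left(\frac{\partial}{\partial b}\right)^{m-1}X_1$ if $n=2m-1$ ($m\ge1$), $X_n=\left(\frac{\partial}{\partial a}\right)^{m-2}\left(\frac{\partial}{\partial b}\right)^{m-2}X_2$ if $n=2m-2$ ($m\ge2$). Then: if $n=2m-1$, $$X_n=\frac{(2m-2)!\,(2m-3)!!}{(2m-2)!!\,(2^2ab)^{m-1}}\left\{\frac{\arctan\sqrt{b/a}}{\sqrt{ab}}+\sum_{k=1}^{m-1}\frac{(2k-2)!!\,(b-a)(2^2ab)^{k-1}}{(2k-1)!!\,(a+b)^{2k}}\right\};$$ if $n=2m-2$, $$X_n=\frac{(2m-3)!\,(2m-4)!!}{(2m-3)!!\,(2^2ab)^{m-2}}\left\{\frac{1}{2a(a+b)}+\sum_{k=2}^{m-1}\frac{(2k-3)!!\,(b-a)(2^2ab)^{k-2}}{(2k-2)!!\,(a+b)^{2k-1}}\right\}.$$ Consequently, for $x=(x_1,\dots,x_{n+1})\in\mathbf{R}^{n+1}$ with $r=\sqrt{\sum_{j=1}^{n+1}x_j^2}$ and $r>|x_{n+1}|$, the function $$f(r,x_{n+1})=\int_0^1\frac{2^nt^{n-1}}{\{r-x_{n+1}+t^2(r+x_{n+1})\}^n}\,dt$$ is given as follows: if $n=2m-1$, $$f(r,x_{n+1})=\frac{(2m-3)!!}{(2m-2)!!\,(r^2-x_{2m}^2)^{m-1}}\left\{\frac{2\arctan\sqrt{\frac{r+x_{2m}}{r-x_{2m}}}}{(r^2-x_{2m}^2)^{1/2}}+\sum_{k=1}^{m-1}\frac{(2k-2)!!\,x_{2m}(r^2-x_{2m}^2)^{k-1}}{(2k-1)!!\,r^{2k}}\right\};$$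 if $n=2m-2$, $$f(r,x_{n+1})=\frac{(2m-4)!!}{(2m-3)!!\,(r^2-x_{2m-1}^2)^{m-1}}\left\{1+\sum_{k=1}^{m-1}\frac{(2k-3)!!\,x_{2m-1}(r^2-x_{2m-1}^2)^{k-1}}{(2k-2)!!\,r^{2k-1}}\right\}.$$
   Context: Double factorials use the conventions $(-1)!!=0!!=1$. Empty sums are zero. Here $a=r-x_{n+1}$, $b=r+x_{n+1}$ relate the two parts of the statement, and $f(r,x_{n+1})=\frac{2^n}{(n-1)!}X_n$ evaluated at these $a,b$. *)

(* Defs.v *)
From Stdlib Require Import Reals ZArith Lra Lia.
From Coquelicot Require Import Coquelicot.
Open Scope R_scope.

Fixpoint dfact_nat (n : nat) : nat :=
  match n with
  | O => 1%nat
  | S O => 1%nat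
  | S (S p) => (n * dfact_nat p)%nat
  end.

(* double factorial on integers, as a real; convention (-1)!! = 1
   (negative arguments, of which only -1 occurs, give 1). *)
Definition dfact (z : Z) : R :=
  if (z <? 0)%Z then 1 else INR (dfact_nat (Z.to_nat z)).

Definition partial_ab (i j : nat) (g : R -> R -> R) (a b : R) : R :=
  Derive_n (fun a' => Derive_n (fun b' => g a' b') j b) i a.

Definition X1 (a b : R) : R := atan (sqrt (b / a)) / sqrt (a * b).
Definition X2 (a b : R) : R := 1 / (2 * a * (a + b)).

(* X_n : n = 2m-1 -> (d/da)^(m-1)(d/db)^(m-1) X1 ; n = 2m-2 -> (d/da)^(m-2)(d/db)^(m-2) X2 *)
Definition Xn (n : nat) (a b : R) : R :=
  if Nat.odd n then partial_ab ((n - 1) / 2) ((n - 1) / 2) X1 a b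
  else partial_ab ((n - 2) / 2) ((n - 2) / 2) X2 a b.

Definition f_int (n : nat) (r xl : R) : R :=
  RInt (fun t => 2 ^ n * t ^ (n - 1) / (r - xl + t ^ 2 * (r + xl)) ^ n) 0 1.

(* Main.v *)
Require Import Defs.
From Stdlib Require Import Reals ZArith.
From Coquelicot Require Import Coquelicot.
From Stdlib Require Import Lra Lia.
Open Scope R_scope.

Lemma cont_of_derive (h : R -> R) v : ex_derive h v -> continuity_pt h v.
Proof. intros H. apply continuity_pt_filterlim. apply (ex_derive_continuous (K:=R_AbsRing) (V:=R_NormedModule)). apply H. Qed.

Lemma param_deriv (p : nat) (w k c : R -> R) (x : R) :
  (forall v, ex_derive w v) -> (forall v, ex_derive k v) -> (forall v, ex_derive c v) ->
  (forall z v, 0 < z -> 0 < z * k v + c v) -> 0 < x ->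
  is_derive (fun z => RInt (fun v => w v / (z * k v + c v) ^ p) 0 1) x
    (RInt (fun v => - INR p * k v * w v / (x * k v + c v) ^ (S p)) 0 1).
Proof.
  intros Hw Hk Hc Hpos Hx.
  assert (Hd : forall z v, 0 < z -> is_derive (fun u => w v / (u * k v + c v) ^ p) z
            (- INR p * k v * w v / (z * k v + c v) ^ (S p))).
  { intros z v Hz. specialize (Hpos z v Hz).
    auto_derive. { apply pow_nonzero; lra. }
    set (D := z * k v + c v) in *. assert (HD : D <> 0) by lra.
    destruct p as [|p'].
    { simpl. field. exact HD. }
    simpl pred. rewrite <- !tech_pow_Rmult. field. split; [apply pow_nonzero; exact HD|exact HD]. }
  assert (Hloc : locally x (fun y => 0 < y)).
  { apply (locally_interval _ x 0 p_infty); simpl; auto. }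
  set (F := fun z v => w v / (z * k v + c v) ^ p).
  assert (H1 : locally x (fun x0 => forall t, Rmin 0 1 <= t <= Rmax 0 1 -> ex_derive (fun u => F u t) x0)).
  { apply (filter_imp (fun y => 0 < y)); [|exact Hloc].
    intros y Hy t _. eexists. apply Hd; auto. }
  assert (H2 : forall t, Rmin 0 1 <= t <= Rmax 0 1 -> continuity_2d_pt (fun u v => Derive (fun z => F z v) u) x t).
  { intros t _.
    set (g := fun u v => (- INR p * k v * w v) * / ((u * k v + c v) ^ S p)).
    assert (Cg : continuity_2d_pt g x t).
    { unfold g. apply continuity_2d_pt_mult.
      - apply (continuity_1d_2d_pt_comp (fun y => - INR p * k y * w y) (fun _ v => v)).
        + apply cont_of_derive. auto_derive. auto.
        + apply continuity_2d_pt_id2.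
      - apply (continuity_1d_2d_pt_comp (fun y => / y ^ S p) (fun u v => u * k v + c v)).
        + apply cont_of_derive. specialize (Hpos x t Hx). auto_derive. change (_ * _ ^ p) with ((x * k t + c t) ^ S p). apply pow_nonzero; lra.
        + apply continuity_2d_pt_plus.
          * apply continuity_2d_pt_mult. apply continuity_2d_pt_id1.
            apply (continuity_1d_2d_pt_comp k (fun _ v => v)). apply cont_of_derive; auto.
            apply continuity_2d_pt_id2.
          * apply (continuity_1d_2d_pt_comp c (fun _ v => v)). apply cont_of_derive; auto.
            apply continuity_2d_pt_id2. }
    assert (Heq : forall u v, 0 < u -> Derive (fun z => F z v) u = g u v).
    { intros u v Hu. apply is_derive_unique. unfold g, F.
      eapply is_derive_ext; [|apply Hd; exact Hu]. intros; reflexivity. 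
      }
    intros eps. specialize (Cg eps).
    destruct Cg as [d Hd'].
    exists (mkposreal (Rmin d x) (Rmin_pos _ _ (cond_pos d) Hx)). intros u v Hu Hv. simpl in Hu.
    assert (Hu1 : Rabs (u - x) < d) by (eapply Rlt_le_trans; [exact Hu| apply Rmin_l]).
    assert (Hu2 : Rabs (u - x) < x) by (eapply Rlt_le_trans; [exact Hu| apply Rmin_r]).
    assert (Hv1 : Rabs (v - t) < d) by (eapply Rlt_le_trans; [exact Hv| apply Rmin_l]).
    apply Rabs_def2 in Hu2.
    rewrite (Heq u v) by lra. rewrite (Heq x t) by lra. apply Hd'; auto. }
  assert (H3 : locally x (fun y => ex_RInt (fun t => F y t) 0 1)).
  { apply (filter_imp (fun y => 0 < y)); [|exact Hloc].
    intros y Hy. apply (ex_RInt_continuous (V:=R_CompleteNormedModule)). intros z _.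
    apply (ex_derive_continuous (K:=R_AbsRing) (V:=R_NormedModule)).
    specialize (Hpos y z Hy). unfold F.
    auto_derive. repeat split; auto. apply pow_nonzero; lra. }
  pose proof (is_derive_RInt_param F 0 1 x H1 H2 H3) as HH.
  replace (RInt (fun v => - INR p * k v * w v / (x * k v + c v) ^ (S p)) 0 1)
    with (RInt (fun t => Derive (fun u => F u t) x) 0 1).
  exact HH.
  apply RInt_ext; intros t _. apply is_derive_unique; apply Hd; auto.
Qed.

Definition J (p q : nat) (a b : R) : R := RInt (fun t => t ^ q / (a + b * t ^ 2) ^ p) 0 1.

Lemma J_ex p q a b : 0 < a -> 0 < b -> ex_RInt (fun t => t ^ q / (a + b * t ^ 2) ^ p) 0 1.
Proof.
  intros Ha Hb. apply (ex_RInt_continuous (V:=R_CompleteNormedModule)). intros z _.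
  apply (ex_derive_continuous (K:=R_AbsRing) (V:=R_NormedModule)).
  assert (0 < a + b * z ^ 2) by (assert (0 <= z^2) by (simpl; nra); nra).
  auto_derive. apply pow_nonzero; lra.
Qed.

Lemma RInt_scal_R (f : R -> R) a b l : ex_RInt f a b -> RInt (fun x => l * f x) a b = l * RInt f a b.
Proof. intros H. exact (RInt_scal (V:=R_CompleteNormedModule) f a b l H). Qed.

Lemma RInt_ext_R (f g : R -> R) a b : (forall x, f x = g x) -> RInt f a b = RInt g a b.
Proof. intros H. apply RInt_ext. intros; apply H. Qed.

Lemma J_db p q a b : 0 < a -> 0 < b ->
  is_derive (fun b' => J p q a b') b (- INR p * J (S p) (q + 2) a b).
Proof.
  intros Ha Hb.
  pose proof (param_deriv p (fun v => v ^ q) (fun v => v ^ 2) (fun _ => a) b) as H.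
  assert (E : forall z, J p q a z = RInt (fun v => v ^ q / (z * v ^ 2 + a) ^ p) 0 1).
  { intros z. unfold J. apply RInt_ext. intros t _. f_equal. f_equal. ring. }
  eapply is_derive_ext. { intros z. symmetry. apply E. }
  replace (- INR p * J (S p) (q + 2) a b) with
    (RInt (fun v => - INR p * v ^ 2 * v ^ q / (b * v ^ 2 + a) ^ S p) 0 1).
  apply H.
  - intros; auto_derive; auto.
  - intros; auto_derive; auto.
  - intros; auto_derive; auto.
  - intros z v Hz. assert (0 <= v^2) by (simpl; nra). nra.
  - exact Hb.
  - unfold J. rewrite <- RInt_scal_R by (apply J_ex; auto).
    apply RInt_ext_R. intros t.
    rewrite pow_add. replace (b * t ^ 2 + a) with (a + b * t ^ 2) by ring. unfold Rdiv; ring.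
Qed.

Lemma J_da p q a b : 0 < a -> 0 < b ->
  is_derive (fun a' => J p q a' b) a (- INR p * J (S p) q a b).
Proof.
  intros Ha Hb.
  pose proof (param_deriv p (fun v => v ^ q) (fun v => 1) (fun v => b * v ^ 2) a) as H.
  assert (E : forall z, J p q z b = RInt (fun v => v ^ q / (z * 1 + b * v ^ 2) ^ p) 0 1).
  { intros z. unfold J. apply RInt_ext. intros t _. f_equal. f_equal. ring. }
  eapply is_derive_ext. { intros z. symmetry. apply E. }
  replace (- INR p * J (S p) q a b) with
    (RInt (fun v => - INR p * 1 * v ^ q / (a * 1 + b * v ^ 2) ^ S p) 0 1).
  apply H.
  - intros; auto_derive; auto.
  - intros; auto_derive; auto.
  - intros; auto_derive; auto.
  - intros z v Hz. assert (0 <= v^2) by (simpl; nra). nra.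
  - exact Ha.
  - unfold J. rewrite <- RInt_scal_R by (apply J_ex; auto).
    apply RInt_ext_R. intros t.
    rewrite !Rmult_1_r. unfold Rdiv; ring.
Qed.

Fixpoint cf (p j : nat) : R := match j with O => 1 | S j => cf p j * (- INR (p + j)) end.

Lemma pos_loc x : 0 < x -> locally x (fun y => 0 < y).
Proof. intros. apply (locally_interval _ x 0 p_infty); simpl; auto. Qed.

Lemma Jb_n j : forall p q a b, 0 < a -> 0 < b ->
  Derive_n (fun b' => J p q a b') j b = cf p j * J (p + j) (q + 2 * j) a b.
Proof.
  induction j as [|j IH]; intros p q a b Ha Hb.
  - simpl. rewrite Nat.add_0_r, Nat.add_0_r. ring.
  - simpl Derive_n.
    rewrite (Derive_ext_loc _ (fun b' => cf p j * J (p + j) (q + 2 * j) a b')).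
    2: { apply (filter_imp (fun y => 0 < y)); [|apply pos_loc; auto]. intros y Hy. apply IH; auto. }
    apply is_derive_unique.
    replace (p + S j)%nat with (S (p + j)) by lia.
    replace (q + 2 * S j)%nat with (q + 2 * j + 2)%nat by lia.
    replace (cf p (S j) * J (S (p + j)) (q + 2 * j + 2) a b) with
      (cf p j * (- INR (p + j) * J (S (p + j)) (q + 2 * j + 2) a b)) by (simpl; ring).
    apply is_derive_scal. apply J_db; auto.
Qed.

Lemma Ja_n i : forall p q a b, 0 < a -> 0 < b ->
  Derive_n (fun a' => J p q a' b) i a = cf p i * J (p + i) q a b.
Proof.
  induction i as [|i IH]; intros p q a b Ha Hb.
  - simpl. rewrite Nat.add_0_r. ring.
  - simpl Derive_n.
    rewrite (Derive_ext_loc _ (fun a' => cf p i * J (p + i) q a' b)).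
    2: { apply (filter_imp (fun y => 0 < y)); [|apply pos_loc; auto]. intros y Hy. apply IH; auto. }
    apply is_derive_unique.
    replace (p + S i)%nat with (S (p + i)) by lia.
    replace (cf p (S i) * J (S (p + i)) q a b) with
      (cf p i * (- INR (p + i) * J (S (p + i)) q a b)) by (simpl; ring).
    apply is_derive_scal. apply J_da; auto.
Qed.

Lemma cf_add p i j : cf p (j + i) = cf p j * cf (p + j) i.
Proof.
  induction i as [|i IH]; simpl.
  - rewrite Nat.add_0_r. ring.
  - rewrite Nat.add_succ_r. simpl. rewrite IH. replace (p + (j + i))%nat with (p + j + i)%nat by lia. ring.
Qed.

Lemma partial_J (g : R -> R -> R) p q i j a b : 0 < a -> 0 < b ->
  (forall a' b', 0 < a' -> 0 < b' -> g a' b' = J p q a' b') ->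
  Derive_n (fun a' => Derive_n (fun b' => g a' b') j b) i a
   = cf p (j + i) * J (p + j + i) (q + 2 * j) a b.
Proof.
  intros Ha Hb Hg.
  rewrite (Derive_n_ext_loc _ (fun a' => cf p j * J (p + j) (q + 2 * j) a' b)).
  2: { apply (filter_imp (fun y => 0 < y)); [|apply pos_loc; auto]. intros y Hy.
       rewrite <- Jb_n by auto. apply Derive_n_ext_loc.
       apply (filter_imp (fun y => 0 < y)); [|apply pos_loc; auto]. intros z Hz. apply Hg; auto. }
  rewrite Derive_n_scal_l. rewrite Ja_n by auto. rewrite cf_add. ring.
Qed.

Ltac nz := repeat match goal with |- _ * _ <> 0 => apply Rmult_integral_contrapositive_currified end;
  try (apply Rgt_not_eq; nra).

Lemma RInt_by_deriv (F f : R -> R) :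
  (forall x, 0 <= x <= 1 -> is_derive F x (f x)) ->
  (forall x, 0 <= x <= 1 -> ex_derive f x) ->
  RInt f 0 1 = F 1 - F 0.
Proof.
  intros HF Hf. apply is_RInt_unique.
  apply (is_RInt_derive (V:=R_CompleteNormedModule)).
  - intros x Hx. rewrite Rmin_left, Rmax_right in Hx by lra. apply HF; auto.
  - intros x Hx. rewrite Rmin_left, Rmax_right in Hx by lra.
    apply (ex_derive_continuous (K:=R_AbsRing) (V:=R_NormedModule)). apply Hf; auto.
Qed.

Lemma J10 a b : 0 < a -> 0 < b -> J 1 0 a b = atan (sqrt (b / a)) / sqrt (a * b).
Proof.
  intros Ha Hb. unfold J.
  assert (Hsa : 0 < sqrt a) by (apply sqrt_lt_R0; auto).
  assert (Hsb : 0 < sqrt b) by (apply sqrt_lt_R0; auto).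
  rewrite sqrt_div_alt by auto. rewrite sqrt_mult by lra.
  assert (Ea : a = sqrt a * sqrt a) by (rewrite sqrt_sqrt; lra).
  assert (Eb : b = sqrt b * sqrt b) by (rewrite sqrt_sqrt; lra).
  set (sa := sqrt a) in *. set (sb := sqrt b) in *.
  assert (HH : RInt (fun t => t ^ 0 / (a + b * t ^ 2) ^ 1) 0 1 =
     atan (1 * (sb / sa)) / (sa * sb) - atan (0 * (sb / sa)) / (sa * sb)).
  { apply (RInt_by_deriv (fun t => atan (t * (sb / sa)) / (sa * sb))).
    - intros y _. auto_derive. { exact I. }
      rewrite Ea, Eb. simpl. assert (0 <= y * y) by nra. assert (0 < sa*sa) by nra. field; repeat split; nra.
    - intros y _. auto_derive. assert (0 <= y^2) by (simpl; nra). simpl in *. nra. }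
  rewrite HH. rewrite Rmult_0_l, atan_0, Rmult_1_l. unfold Rdiv. ring.
Qed.

Lemma J21 a b : 0 < a -> 0 < b -> J 2 1 a b = 1 / (2 * a * (a + b)).
Proof.
  intros Ha Hb. unfold J.
  rewrite (RInt_by_deriv (fun t => - / (2 * b * (a + b * t ^ 2)))).
  2:{ intros y _. assert (0 <= y^2) by (simpl; nra). auto_derive. { nra. }
    simpl in *. assert (0 < a + b * (y*y)) by nra. field. repeat split; apply Rgt_not_eq; lra. }
  2:{ intros y _. auto_derive. assert (0 <= y*y) by nra. simpl in *. assert (0 < a + b * (y*y)) by nra. nz. }
  simpl. field. lra.
Qed.

Lemma RInt_minus_R (f g : R -> R) a b : ex_RInt f a b -> ex_RInt g a b ->
  RInt (fun x => f x - g x) a b = RInt f a b - RInt g a b.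
Proof. intros H1 H2. exact (RInt_minus (V:=R_CompleteNormedModule) f g a b H1 H2). Qed.

Lemma J_rec n a b : 0 < a -> 0 < b ->
  4 * a * b * INR (n + 2) * J (n + 3) (n + 2) a b =
  INR (n + 1) * J (n + 1) n a b + (b - a) / (a + b) ^ (n + 2).
Proof.
  intros Ha Hb. unfold J.
  assert (HH : RInt (fun t => (4 * a * b * INR (n + 2)) * (t ^ (n + 2) / (a + b * t ^ 2) ^ (n + 3))
                     - INR (n + 1) * (t ^ n / (a + b * t ^ 2) ^ (n + 1))) 0 1
     = (- (1 ^ (n + 1) * (a - b * 1 ^ 2) / (a + b * 1 ^ 2) ^ (n + 2)))
       - (- (0 ^ (n + 1) * (a - b * 0 ^ 2) / (a + b * 0 ^ 2) ^ (n + 2)))).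
  { apply (RInt_by_deriv (fun t => - (t ^ (n + 1) * (a - b * t ^ 2) / (a + b * t ^ 2) ^ (n + 2)))).
    - intros y _. assert (0 <= y*y) by nra. assert (0 < a + b * (y*y)) by nra.
      auto_derive. { simpl. apply pow_nonzero. lra. }
      replace (Init.Nat.pred (n+1)) with n by lia. replace (Init.Nat.pred (n+2)) with (n+1)%nat by lia.
      rewrite !pow_add, !plus_INR. simpl.
      assert (HD : (a + b * (y * y)) ^ n <> 0) by (apply pow_nonzero; lra).
      rewrite !Rmult_1_r. field. split; [lra|exact HD].
    - intros y _. assert (0 <= y*y) by nra. assert (0 < a + b * (y*y)) by nra.
      auto_derive. simpl. rewrite !Rmult_1_r. split; [|split; [|exact I]]; apply pow_nonzero; lra. }
  set (f1 := fun t => t ^ (n + 2) / (a + b * t ^ 2) ^ (n + 3)) in *.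
  set (f2 := fun t => t ^ n / (a + b * t ^ 2) ^ (n + 1)) in *.
  assert (E1 : ex_RInt f1 0 1) by (apply J_ex; auto).
  assert (E2 : ex_RInt f2 0 1) by (apply J_ex; auto).
  rewrite (RInt_minus_R (fun t => 4 * a * b * INR (n + 2) * f1 t) (fun t => INR (n + 1) * f2 t)) in HH.
  2: exact (ex_RInt_scal (V:=R_CompleteNormedModule) f1 0 1 _ E1).
  2: exact (ex_RInt_scal (V:=R_CompleteNormedModule) f2 0 1 _ E2).
  rewrite (RInt_scal_R f1 _ _ _ E1), (RInt_scal_R f2 _ _ _ E2) in HH.
  assert (Hx : - (1 ^ (n + 1) * (a - b * 1 ^ 2) / (a + b * 1 ^ 2) ^ (n + 2)) -
    - (0 ^ (n + 1) * (a - b * 0 ^ 2) / (a + b * 0 ^ 2) ^ (n + 2)) = (b - a) / (a + b) ^ (n + 2)).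
  { rewrite !pow1, (pow_i (n + 1)) by lia. replace (a + b * 1) with (a + b) by ring.
    field. split; apply pow_nonzero; simpl; lra. }
  rewrite Hx in HH. lra.
Qed.

Lemma cf1 n : cf 1 n = (-1) ^ n * INR (fact n).
Proof.
  induction n as [|n IH]. { simpl. ring. }
  change (cf 1 (S n)) with (cf 1 n * - INR (1 + n)).
  rewrite IH. change (fact (S n)) with (S n * fact n)%nat. rewrite mult_INR.
  replace (1 + n)%nat with (S n) by lia. simpl pow. ring.
Qed.

Lemma cf2 n : cf 2 n = (-1) ^ n * INR (fact (S n)).
Proof.
  induction n as [|n IH]. { simpl. ring. }
  change (cf 2 (S n)) with (cf 2 n * - INR (2 + n)).
  rewrite IH. change (fact (S (S n))) with (S (S n) * fact (S n))%nat. rewrite mult_INR.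
  replace (2 + n)%nat with (S (S n)) by lia. simpl pow. ring.
Qed.

Lemma m1sq m : (-1) ^ (m + m) = 1.
Proof. rewrite pow_add, <- Rpow_mult_distr. replace (-1 * -1) with 1 by ring. apply pow1. Qed.

Lemma Xn_odd m a b : 0 < a -> 0 < b ->
  Xn (2 * S m - 1) a b = INR (fact (2 * m)) * J (2 * m + 1) (2 * m) a b.
Proof.
  intros Ha Hb. unfold Xn.
  replace (2 * S m - 1)%nat with (S (2 * m)) by lia.
  assert (Ho : Nat.odd (S (2 * m)) = true).
  { rewrite Nat.odd_succ, Nat.even_mul. reflexivity. }
  rewrite Ho. replace (S (2 * m) - 1)%nat with (m * 2)%nat by lia. rewrite Nat.div_mul by lia.
  unfold partial_ab. rewrite (partial_J X1 1 0) by (auto; intros; symmetry; apply J10; auto).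
  rewrite cf1, m1sq. replace (m + m)%nat with (2 * m)%nat by lia.
  replace (1 + m + m)%nat with (2 * m + 1)%nat by lia. replace (0 + 2 * m)%nat with (2 * m)%nat by lia.
  ring.
Qed.

Lemma Xn_even m a b : 0 < a -> 0 < b ->
  Xn (2 * S (S m) - 2) a b = INR (fact (2 * m + 1)) * J (2 * m + 2) (2 * m + 1) a b.
Proof.
  intros Ha Hb. unfold Xn.
  replace (2 * S (S m) - 2)%nat with (S (S (2 * m))) by lia.
  assert (Ho : Nat.odd (S (S (2 * m))) = false).
  { rewrite Nat.odd_succ, Nat.even_succ, Nat.odd_mul. reflexivity. }
  rewrite Ho. replace (S (S (2 * m)) - 2)%nat with (m * 2)%nat by lia. rewrite Nat.div_mul by lia.
  unfold partial_ab. rewrite (partial_J X2 2 1) by (auto; intros; symmetry; apply J21; auto).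
  rewrite cf2, m1sq. replace (S (m + m))%nat with (2 * m + 1)%nat by lia.
  replace (2 + m + m)%nat with (2 * m + 2)%nat by lia. replace (1 + 2 * m)%nat with (2 * m + 1)%nat by lia.
  ring.
Qed.

Lemma dfact_nat_pos : forall n, (0 < dfact_nat n)%nat.
Proof.
  assert (H : forall n, (0 < dfact_nat n)%nat /\ (0 < dfact_nat (S n))%nat).
  { induction n as [|n [IH1 IH2]]; simpl; [lia|]. split; [exact IH2|]. 
    change (0 < S (S n) * dfact_nat n)%nat. lia. }
  intros n; apply H.
Qed.

Lemma dfact_pos z : 0 < dfact z.
Proof.
  unfold dfact. destruct (z <? 0)%Z; [lra|]. apply lt_0_INR. apply dfact_nat_pos.
Qed.

Lemma dfact_step z w : (z = w + 2)%Z -> (-1 <= w)%Z -> dfact z = IZR (w + 2) * dfact w.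
Proof.
  intros -> Hw. unfold dfact.
  destruct (Z.eq_dec w (-1)) as [->|Hne].
  { simpl. ring. }
  assert (H1 : (w + 2 <? 0)%Z = false) by (apply Z.ltb_ge; lia).
  assert (H2 : (w <? 0)%Z = false) by (apply Z.ltb_ge; lia).
  rewrite H1, H2.
  replace (Z.to_nat (w + 2)) with (S (S (Z.to_nat w))) by lia.
  change (dfact_nat (S (S (Z.to_nat w)))) with (S (S (Z.to_nat w)) * dfact_nat (Z.to_nat w))%nat.
  rewrite mult_INR. f_equal.
  rewrite INR_IZR_INZ. f_equal. lia.
Qed.

Ltac izr := rewrite ?plus_IZR, ?minus_IZR, ?mult_IZR, <- ?INR_IZR_INZ, ?S_INR; simpl IZR.

Definition Podd (m : nat) (a b : R) : R :=
       INR (fact (2 * m - 2)) * dfact (2 * Z.of_nat m - 3)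
         / (dfact (2 * Z.of_nat m - 2) * (2 ^ 2 * a * b) ^ (m - 1))
       * (atan (sqrt (b / a)) / sqrt (a * b)
          + sum_n_m (fun k => dfact (2 * Z.of_nat k - 2) * (b - a) * (2 ^ 2 * a * b) ^ (k - 1)
                              / (dfact (2 * Z.of_nat k - 1) * (a + b) ^ (2 * k)))
              1 (m - 1)).

Definition Peven (m : nat) (a b : R) : R :=
       INR (fact (2 * m - 3)) * dfact (2 * Z.of_nat m - 4)
         / (dfact (2 * Z.of_nat m - 3) * (2 ^ 2 * a * b) ^ (m - 2))
       * (1 / (2 * a * (a + b))
          + sum_n_m (fun k => dfact (2 * Z.of_nat k - 3) * (b - a) * (2 ^ 2 * a * b) ^ (k - 2)
                              / (dfact (2 * Z.of_nat k - 2) * (a + b) ^ (2 * k - 1)))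
              2 (m - 1)).

Lemma odd_closed m a b : 0 < a -> 0 < b ->
  INR (fact (2 * m)) * J (2 * m + 1) (2 * m) a b = Podd (S m) a b.
Proof.
  intros Ha Hb. induction m as [|m IH].
  - unfold Podd. simpl. rewrite sum_n_m_zero by lia. rewrite J10 by auto.
    unfold dfact; simpl. change (zero : R) with 0. field. apply Rgt_not_eq, sqrt_lt_R0; nra.
  - unfold Podd in *.
    replace (2 * S (S m) - 2)%nat with (S (S (2 * m))) in * by lia.
    replace (2 * S m - 2)%nat with (2 * m)%nat in * by lia.
    replace (S (S m) - 1)%nat with (S m) by lia.
    replace (S m - 1)%nat with m in * by lia.
    rewrite sum_n_Sm by lia.
    rewrite (dfact_step (2 * Z.of_nat (S (S m)) - 3) (2 * Z.of_nat (S m) - 3)) by lia.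
    rewrite (dfact_step (2 * Z.of_nat (S (S m)) - 2) (2 * Z.of_nat (S m) - 2)) by lia.
    rewrite (dfact_step (2 * Z.of_nat (S m) - 1) (2 * Z.of_nat (S m) - 3)) by lia.
    replace (S m - 1)%nat with m by lia.
    replace (2 * S m)%nat with (2 * m + 2)%nat by lia.
    replace (2 * S m + 1)%nat with (2 * m + 3)%nat by lia.
    pose proof (J_rec (2 * m) a b Ha Hb) as R.
    change (fact (S (S (2 * m)))) with (S (S (2 * m)) * (S (2 * m) * fact (2 * m)))%nat.
    rewrite !mult_INR.
    set (F := INR (fact (2 * m))) in *.
    set (d1 := dfact (2 * Z.of_nat (S m) - 3)) in *.
    set (d2 := dfact (2 * Z.of_nat (S m) - 2)) in *.
    set (Q := 2 ^ 2 * a * b) in *.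
    set (S0 := sum_n_m _ 1 m) in *.
    set (X := atan (sqrt (b / a)) / sqrt (a * b)) in *.
    replace (fact (2 * m + 2)) with (S (S (2 * m)) * (S (2 * m) * fact (2 * m)))%nat by (replace (2 * m + 2)%nat with (S (S (2 * m))) by lia; reflexivity).
    rewrite !mult_INR. fold F.
    replace (2 * m + 2 + 1)%nat with (2 * m + 3)%nat by lia.
    set (Jn := J (2 * m + 3) (2 * m + 2) a b) in *.
    set (Jp := J (2 * m + 1) (2 * m) a b) in *.
    replace (IZR (2 * Z.of_nat (S m) - 3 + 2)) with (2 * INR m + 1) by (izr; ring).
    replace (IZR (2 * Z.of_nat (S m) - 2 + 2)) with (2 * INR m + 2) by (izr; ring).
    replace (INR (S (S (2 * m)))) with (2 * INR m + 2) in * by (rewrite !S_INR, mult_INR; simpl; ring).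
    replace (INR (S (2 * m))) with (2 * INR m + 1) in * by (rewrite !S_INR, mult_INR; simpl; ring).
    replace (INR (2 * m + 2)) with (2 * INR m + 2) in * by (rewrite plus_INR, mult_INR; simpl; ring).
    replace (INR (2 * m + 1)) with (2 * INR m + 1) in * by (rewrite plus_INR, mult_INR; simpl; ring).
    change (plus S0 ?t) with (S0 + t).
    assert (HF : 0 < F) by (apply lt_0_INR, lt_O_fact).
    assert (Hd1 : 0 < d1) by apply dfact_pos.
    assert (Hd2 : 0 < d2) by apply dfact_pos.
    assert (HQ : 0 < Q) by (unfold Q; simpl; nra).
    assert (HQm : 0 < Q ^ m) by (apply pow_lt; auto).
    assert (Hab : 0 < (a + b) ^ (2 * m + 2)) by (apply pow_lt; lra).
    assert (Hm : 0 <= INR m) by apply pos_INR.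
    assert (HJp : Jp = d1 / (d2 * Q ^ m) * (X + S0)).
    { apply (Rmult_eq_reg_l F); [|lra]. rewrite IH. field. lra. }
    assert (HJn : Jn = ((2 * INR m + 1) * Jp + (b - a) / (a + b) ^ (2 * m + 2)) / (Q * (2 * INR m + 2))).
    { apply (Rmult_eq_reg_l (Q * (2 * INR m + 2))); [|nra]. unfold Q. rewrite <- R. field. nra. }
    rewrite HJn, HJp. change (Q ^ S m) with (Q * Q ^ m). field. repeat split; apply Rgt_not_eq; lra.
Qed.

Lemma even_closed m a b : 0 < a -> 0 < b ->
  INR (fact (2 * m + 1)) * J (2 * m + 2) (2 * m + 1) a b = Peven (S (S m)) a b.
Proof.
  intros Ha Hb. induction m as [|m IH].
  - unfold Peven. simpl. rewrite sum_n_m_zero by lia. rewrite J21 by auto.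
    unfold dfact; simpl. change (zero : R) with 0. field. lra.
  - unfold Peven in *.
    replace (2 * S (S (S m)) - 3)%nat with (S (S (2 * m + 1))) by lia.
    replace (2 * S (S m) - 3)%nat with (2 * m + 1)%nat in * by lia.
    replace (S (S (S m)) - 2)%nat with (S m) by lia.
    replace (S (S m) - 2)%nat with m in * by lia.
    replace (S (S (S m)) - 1)%nat with (S (S m)) by lia.
    replace (S (S m) - 1)%nat with (S m) in * by lia.
    rewrite sum_n_Sm by lia.
    rewrite (dfact_step (2 * Z.of_nat (S (S (S m))) - 4) (2 * Z.of_nat (S (S m)) - 4)) by lia.
    rewrite (dfact_step (2 * Z.of_nat (S (S (S m))) - 3) (2 * Z.of_nat (S (S m)) - 3)) by lia.
    rewrite (dfact_step (2 * Z.of_nat (S (S m)) - 2) (2 * Z.of_nat (S (S m)) - 4)) by lia.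
    replace (S (S m) - 2)%nat with m by lia.
    replace (2 * S (S m) - 1)%nat with (2 * m + 3)%nat by lia.
    replace (2 * S m + 2)%nat with (2 * m + 4)%nat by lia.
    replace (2 * S m + 1)%nat with (2 * m + 3)%nat by lia.
    pose proof (J_rec (2 * m + 1) a b Ha Hb) as R.
    replace (2 * m + 1 + 3)%nat with (2 * m + 4)%nat in R by lia.
    replace (2 * m + 1 + 2)%nat with (2 * m + 3)%nat in R by lia.
    replace (2 * m + 1 + 1)%nat with (2 * m + 2)%nat in R by lia.
    replace (fact (2 * m + 3)) with (S (S (2 * m + 1)) * (S (2 * m + 1) * fact (2 * m + 1)))%nat by (replace (2 * m + 3)%nat with (S (S (2 * m + 1))) by lia; reflexivity).
    change (fact (S (S (2 * m + 1)))) with (S (S (2 * m + 1)) * (S (2 * m + 1) * fact (2 * m + 1)))%nat.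
    rewrite !mult_INR.
    set (F := INR (fact (2 * m + 1))) in *.
    set (e1 := dfact (2 * Z.of_nat (S (S m)) - 4)) in *.
    set (e2 := dfact (2 * Z.of_nat (S (S m)) - 3)) in *.
    set (Q := 2 ^ 2 * a * b) in *.
    set (S0 := sum_n_m _ 2 (S m)) in *.
    set (X := 1 / (2 * a * (a + b))) in *.
    set (Jn := J (2 * m + 4) (2 * m + 3) a b) in *.
    set (Jp := J (2 * m + 2) (2 * m + 1) a b) in *.
    replace (IZR (2 * Z.of_nat (S (S m)) - 4 + 2)) with (2 * INR m + 2) by (izr; ring).
    replace (IZR (2 * Z.of_nat (S (S m)) - 3 + 2)) with (2 * INR m + 3) by (izr; ring).
    replace (INR (S (S (2 * m + 1)))) with (2 * INR m + 3) in * by (rewrite !S_INR, plus_INR, mult_INR; simpl; ring).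
    replace (INR (S (2 * m + 1))) with (2 * INR m + 2) in * by (rewrite !S_INR, plus_INR, mult_INR; simpl; ring).
    replace (INR (2 * m + 3)) with (2 * INR m + 3) in * by (rewrite plus_INR, mult_INR; simpl; ring).
    replace (INR (2 * m + 2)) with (2 * INR m + 2) in * by (rewrite plus_INR, mult_INR; simpl; ring).
    change (plus S0 ?t) with (S0 + t).
    assert (HF : 0 < F) by (apply lt_0_INR, lt_O_fact).
    assert (Hd1 : 0 < e1) by apply dfact_pos.
    assert (Hd2 : 0 < e2) by apply dfact_pos.
    assert (HQ : 0 < Q) by (unfold Q; simpl; nra).
    assert (HQm : 0 < Q ^ m) by (apply pow_lt; auto).
    assert (Hab : 0 < (a + b) ^ (2 * m + 3)) by (apply pow_lt; lra).
    assert (Hm : 0 <= INR m) by apply pos_INR.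
    assert (HJp : Jp = e1 / (e2 * Q ^ m) * (X + S0)).
    { apply (Rmult_eq_reg_l F); [|lra]. rewrite IH. field. split; apply Rgt_not_eq; lra. }
    assert (HJn : Jn = ((2 * INR m + 2) * Jp + (b - a) / (a + b) ^ (2 * m + 3)) / (Q * (2 * INR m + 3))).
    { apply (Rmult_eq_reg_l (Q * (2 * INR m + 3))); [|nra]. unfold Q. rewrite <- R. field. nra. }
    rewrite HJn, HJp. change (Q ^ S m) with (Q * Q ^ m). field. repeat split; apply Rgt_not_eq; lra.
Qed.

Lemma f_J n r xl : Rabs xl < r -> f_int n r xl = 2 ^ n * J n (n - 1) (r - xl) (r + xl).
Proof.
  intros H. apply Rabs_def2 in H. unfold f_int, J.
  rewrite <- RInt_scal_R by (apply J_ex; lra).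
  apply RInt_ext_R. intros t. replace (r - xl + t ^ 2 * (r + xl)) with (r - xl + (r + xl) * t ^ 2) by ring.
  unfold Rdiv. ring.
Qed.

Lemma sum_ext_R (f g : nat -> R) n m : (forall k, (n <= k <= m)%nat -> f k = g k) ->
  sum_n_m f n m = sum_n_m g n m.
Proof. intros H. apply sum_n_m_ext_loc. exact H. Qed.

Lemma sum_odd_conv m r xl : Rabs xl < r ->
  sum_n_m (fun k => dfact (2 * Z.of_nat k - 2) * ((r + xl) - (r - xl)) * (2 ^ 2 * (r - xl) * (r + xl)) ^ (k - 1)
                              / (dfact (2 * Z.of_nat k - 1) * ((r - xl) + (r + xl)) ^ (2 * k))) 1 m
  = / 2 * sum_n_m (fun k => dfact (2 * Z.of_nat k - 2) * xl * (r ^ 2 - xl ^ 2) ^ (k - 1)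
                              / (dfact (2 * Z.of_nat k - 1) * r ^ (2 * k))) 1 m.
Proof.
  intros Hr. pose proof (Rabs_def2 _ _ Hr) as [H1 H2].
  rewrite <- (sum_n_m_mult_l (K:=R_Ring)). apply sum_ext_R. intros k Hk.
  destruct k as [|k]; [lia|]. 
  replace (S k - 1)%nat with k by lia.
  replace (2 ^ 2 * (r - xl) * (r + xl)) with (4 * (r ^ 2 - xl ^ 2)) by ring.
  replace ((r - xl) + (r + xl)) with (2 * r) by ring.
  rewrite !Rpow_mult_distr.
  replace (2 ^ (2 * S k)) with (4 * 4 ^ k) by (rewrite pow_mult; replace (2 ^ 2) with 4 by ring; reflexivity).
  assert (0 < dfact (2 * Z.of_nat (S k) - 1)) by apply dfact_pos.
  assert (0 < 4 ^ k) by (apply pow_lt; lra).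
  assert (0 < r ^ (2 * S k)) by (apply pow_lt; lra).
  change (mult ?u ?v) with (u * v). field. repeat split; apply Rgt_not_eq; lra.
Qed.

Lemma sum_even_conv m r xl : Rabs xl < r ->
  sum_n_m (fun k => dfact (2 * Z.of_nat k - 3) * ((r + xl) - (r - xl)) * (2 ^ 2 * (r - xl) * (r + xl)) ^ (k - 2)
                              / (dfact (2 * Z.of_nat k - 2) * ((r - xl) + (r + xl)) ^ (2 * k - 1))) 2 m
  = / (4 * (r ^ 2 - xl ^ 2)) * sum_n_m (fun k => dfact (2 * Z.of_nat k - 3) * xl * (r ^ 2 - xl ^ 2) ^ (k - 1)
                              / (dfact (2 * Z.of_nat k - 2) * r ^ (2 * k - 1))) 2 m.
Proof.
  intros Hr. pose proof (Rabs_def2 _ _ Hr) as [H1 H2].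
  rewrite <- (sum_n_m_mult_l (K:=R_Ring)). apply sum_ext_R. intros k Hk.
  destruct k as [|[|k]]; [lia|lia|]. 
  replace (S (S k) - 2)%nat with k by lia.
  replace (S (S k) - 1)%nat with (S k) by lia.
  replace (2 * S (S k) - 1)%nat with (2 * k + 3)%nat by lia.
  replace (2 ^ 2 * (r - xl) * (r + xl)) with (4 * (r ^ 2 - xl ^ 2)) by ring.
  replace ((r - xl) + (r + xl)) with (2 * r) by ring.
  rewrite !Rpow_mult_distr.
  replace (2 ^ (2 * k + 3)) with (8 * 4 ^ k) by (rewrite pow_add, pow_mult; replace (2 ^ 2) with 4 by ring; simpl; ring).
  change ((r ^ 2 - xl ^ 2) ^ S k) with ((r ^ 2 - xl ^ 2) * (r ^ 2 - xl ^ 2) ^ k).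
  assert (0 < dfact (2 * Z.of_nat (S (S k)) - 2)) by apply dfact_pos.
  assert (0 < 4 ^ k) by (apply pow_lt; lra).
  assert (0 < r ^ (2 * k + 3)) by (apply pow_lt; lra).
  assert (0 < r ^ 2 - xl ^ 2) by (simpl; nra).
  change (mult ?u ?v) with (u * v). field. repeat split; apply Rgt_not_eq; lra.
Qed.

Theorem mainTheorem2 :
  (* closed form of X_n, n = 2m-1 *)
  (forall (m : nat) (a b : R), (1 <= m)%nat -> 0 < a -> 0 < b ->
     Xn (2 * m - 1) a b =
       INR (fact (2 * m - 2)) * dfact (2 * Z.of_nat m - 3)
         / (dfact (2 * Z.of_nat m - 2) * (2 ^ 2 * a * b) ^ (m - 1))
       * (atan (sqrt (b / a)) / sqrt (a * b)
          + sum_n_m (fun k => dfact (2 * Z.of_nat k - 2) * (b - a) * (2 ^ 2 * a * b) ^ (k - 1)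
                              / (dfact (2 * Z.of_nat k - 1) * (a + b) ^ (2 * k)))
              1 (m - 1))) /\
  (* closed form of X_n, n = 2m-2 *)
  (forall (m : nat) (a b : R), (2 <= m)%nat -> 0 < a -> 0 < b ->
     Xn (2 * m - 2) a b =
       INR (fact (2 * m - 3)) * dfact (2 * Z.of_nat m - 4)
         / (dfact (2 * Z.of_nat m - 3) * (2 ^ 2 * a * b) ^ (m - 2))
       * (1 / (2 * a * (a + b))
          + sum_n_m (fun k => dfact (2 * Z.of_nat k - 3) * (b - a) * (2 ^ 2 * a * b) ^ (k - 2)
                              / (dfact (2 * Z.of_nat k - 2) * (a + b) ^ (2 * k - 1)))
              2 (m - 1))) /\
  (* f for n = 2m-1; x = (x_0,...,x_n) 0-indexed, so x_{n+1} of the paper is x n *)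
  (forall (m : nat) (x : nat -> R) (r : R), (1 <= m)%nat ->
     let n := (2 * m - 1)%nat in
     r = sqrt (sum_n (fun j => x j ^ 2) n) -> Rabs (x n) < r ->
     f_int n r (x n) =
       dfact (2 * Z.of_nat m - 3)
         / (dfact (2 * Z.of_nat m - 2) * (r ^ 2 - x n ^ 2) ^ (m - 1))
       * (2 * atan (sqrt ((r + x n) / (r - x n))) / sqrt (r ^ 2 - x n ^ 2)
          + sum_n_m (fun k => dfact (2 * Z.of_nat k - 2) * x n * (r ^ 2 - x n ^ 2) ^ (k - 1)
                              / (dfact (2 * Z.of_nat k - 1) * r ^ (2 * k)))
              1 (m - 1))) /\
  (* f for n = 2m-2 *)
  (forall (m : nat) (x : nat -> R) (r : R), (2 <= m)%nat ->
     let n := (2 * m - 2)%nat in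
     r = sqrt (sum_n (fun j => x j ^ 2) n) -> Rabs (x n) < r ->
     f_int n r (x n) =
       dfact (2 * Z.of_nat m - 4)
         / (dfact (2 * Z.of_nat m - 3) * (r ^ 2 - x n ^ 2) ^ (m - 1))
       * (1
          + sum_n_m (fun k => dfact (2 * Z.of_nat k - 3) * x n * (r ^ 2 - x n ^ 2) ^ (k - 1)
                              / (dfact (2 * Z.of_nat k - 2) * r ^ (2 * k - 1)))
              1 (m - 1))).
Proof.
  split; [|split; [|split]].
  - intros m a b Hm Ha Hb. destruct m as [|m]; [lia|].
    rewrite Xn_odd by auto. exact (odd_closed m a b Ha Hb).
  - intros m a b Hm Ha Hb. destruct m as [|[|m]]; [lia|lia|].
    replace (2 * S (S m) - 2)%nat with (2 * S (S m) - 2)%nat by reflexivity.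
    rewrite Xn_even by auto. exact (even_closed m a b Ha Hb).
  - intros m x r Hm n _ Hr. destruct m as [|m]; [lia|].
    set (xl := x n) in *. rewrite f_J by auto.
    pose proof (Rabs_def2 _ _ Hr) as [H1 H2].
    assert (Ha : 0 < r - xl) by lra. assert (Hb : 0 < r + xl) by lra.
    unfold n. replace (2 * S m - 1)%nat with (2 * m + 1)%nat by lia.
    replace (2 * m + 1 - 1)%nat with (2 * m)%nat by lia.
    pose proof (odd_closed m _ _ Ha Hb) as HO. unfold Podd in HO.
    replace (2 * S m - 2)%nat with (2 * m)%nat in HO by lia.
    replace (S m - 1)%nat with m in * by lia.
    rewrite sum_odd_conv in HO by auto.
    replace ((r - xl) * (r + xl)) with (r ^ 2 - xl ^ 2) in HO by ring.
    replace (2 ^ 2 * (r - xl) * (r + xl)) with (4 * (r ^ 2 - xl ^ 2)) in HO by ring.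
    rewrite Rpow_mult_distr in HO.
    rewrite pow_add, pow_mult.
    set (J0 := J (2 * m + 1) (2 * m) (r - xl) (r + xl)) in *.
    set (Sf := sum_n_m _ 1 m) in *.
    set (At := atan _) in *.
    set (d1 := dfact (2 * Z.of_nat (S m) - 3)) in *.
    set (d2 := dfact (2 * Z.of_nat (S m) - 2)) in *.
    assert (HR : 0 < r ^ 2 - xl ^ 2) by (simpl; nra).
    set (R2 := r ^ 2 - xl ^ 2) in *.
    assert (HF : 0 < INR (fact (2 * m))) by (apply lt_0_INR, lt_O_fact).
    assert (Hd2 : 0 < d2) by apply dfact_pos.
    assert (Hs : 0 < sqrt R2) by (apply sqrt_lt_R0; auto).
    assert (H4 : 0 < 4 ^ m) by (apply pow_lt; lra).
    assert (HRm : 0 < R2 ^ m) by (apply pow_lt; lra).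
    assert (HJ : J0 = d1 / (d2 * (4 ^ m * R2 ^ m)) * (At / sqrt R2 + / 2 * Sf)).
    { apply (Rmult_eq_reg_l (INR (fact (2 * m)))); [|lra]. rewrite HO. field. repeat split; apply Rgt_not_eq; lra. }
    rewrite HJ. simpl (2 ^ 2). simpl (2 ^ 1). replace (2 * (2 * 1)) with 4 by ring. field. repeat split; apply Rgt_not_eq; lra.
  - intros m x r Hm n _ Hr. destruct m as [|[|m]]; [lia|lia|].
    set (xl := x n) in *. rewrite f_J by auto.
    pose proof (Rabs_def2 _ _ Hr) as [H1 H2].
    assert (Ha : 0 < r - xl) by lra. assert (Hb : 0 < r + xl) by lra.
    unfold n. replace (2 * S (S m) - 2)%nat with (2 * m + 2)%nat by lia.
    replace (2 * m + 2 - 1)%nat with (2 * m + 1)%nat by lia.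
    pose proof (even_closed m _ _ Ha Hb) as HO. unfold Peven in HO.
    replace (2 * S (S m) - 3)%nat with (2 * m + 1)%nat in HO by lia.
    replace (S (S m) - 2)%nat with m in HO by lia.
    replace (S (S m) - 1)%nat with (S m) in * by lia.
    rewrite sum_even_conv in HO by auto.
    rewrite sum_Sn_m by lia.
    replace (2 ^ 2 * (r - xl) * (r + xl)) with (4 * (r ^ 2 - xl ^ 2)) in HO by ring.
    rewrite Rpow_mult_distr in HO.
    rewrite pow_add, pow_mult.
    set (J0 := J (2 * m + 2) (2 * m + 1) (r - xl) (r + xl)) in *.
    set (Sf := sum_n_m _ 2 (S m)) in *.
    set (d1 := dfact (2 * Z.of_nat (S (S m)) - 4)) in *.
    set (d2 := dfact (2 * Z.of_nat (S (S m)) - 3)) in *.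
    assert (E1 : dfact (2 * Z.of_nat 1 - 3) = 1) by reflexivity.
    assert (E2 : dfact (2 * Z.of_nat 1 - 2) = 1) by reflexivity.
    cbv beta. rewrite E1, E2. change (plus ?u ?v) with (u + v).
    replace (2 * 1 - 1)%nat with 1%nat by reflexivity. replace (1 - 1)%nat with 0%nat by reflexivity.
    assert (HR : 0 < r ^ 2 - xl ^ 2) by (simpl; nra).
    assert (HF : 0 < INR (fact (2 * m + 1))) by (apply lt_0_INR, lt_O_fact).
    assert (Hd2 : 0 < d2) by apply dfact_pos.
    assert (H4 : 0 < 4 ^ m) by (apply pow_lt; lra).
    assert (HRm : 0 < (r ^ 2 - xl ^ 2) ^ m) by (apply pow_lt; lra).
    assert (HJ : J0 = d1 / (d2 * (4 ^ m * (r ^ 2 - xl ^ 2) ^ m)) *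
       (1 / (2 * (r - xl) * ((r - xl) + (r + xl))) + / (4 * (r ^ 2 - xl ^ 2)) * Sf)).
    { apply (Rmult_eq_reg_l (INR (fact (2 * m + 1)))); [|lra]. rewrite HO. field. repeat split; apply Rgt_not_eq; lra. }
    rewrite HJ. change ((r ^ 2 - xl ^ 2) ^ S m) with ((r ^ 2 - xl ^ 2) * (r ^ 2 - xl ^ 2) ^ m).
    replace (2 ^ 2) with 4 by ring. rewrite pow_O, pow_1.
    field. repeat split; apply Rgt_not_eq; lra.
Qed.
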